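(* There exist an objective $f:\mathbb{R}^d\to\mathbb{R}$ satisfying Assumptions 1 and 2, a stochastic gradient oracle $(F,\mathcal{D})$ for $f$ satisfying Assumption 3, an initial point $x^{(0)}\in\mathbb{R}^d$ and a constant $\epsilon_0>0$ such that the following holds: for GaLore with an arbitrary subspace optimizer (as defined in the context), any ranks $r_\ell<\min\{m_\ell,n_\ell\}$, any subspace changing period $\tau\ge 1$, any choice of the maps $\rho_\ell^{(t)}$ (with arbitrary hyperparameters), and every realization of the samples, the iterates satisfy $\|\nabla f(x^{(t)})\|_2^2\ge\epsilon_0$ for all $t\ge 0$.
   Context: Parameters: $x=(\mathrm{vec}(X_1)^\top,\dots,\mathrm{vec}(X_{N_L})^\top)^\top\in\mathbb{R}^d$ with $X_\ell\in\mathbb{R}^{m_\ell\times n_\ell}$, $d=\sum_\ell m_\ell n_\ell$; $f(x)=\mathbb{E}_{\xi\sim\mathcal{D}}F(x;\xi)$ and $\nabla_\ell$ denotes the gradient with respect to $X_\ell$. Assumption 1: $\inf_x f(x)>-\infty$. Assumption 2: $\|\nabla f(x)-\nabla f(y)\|_2\le L\|x-y\|_2$ for all $x,y$. Assumption 3: for all $x$ and $\ell$, $\mathbb{E}_{\xi\sim\mathcal{D}}[\nabla_\ell F(x;\xi)]=\nabla_\ell f(x)$ and $\mathbb{E}_{\xi\sim\mathcal D}\|\nabla_\ell F(x;\xi)-\nabla_\ell f(x)\|_F^2\le\sigma_\ell^2$. GaLore with an arbitrary subspace optimizer: at each iteration $t=0,1,\dots$ draw $\xi^{(t)}\sim\mathcal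 D$ (independently) and set $G_\ell^{(t)}=\nabla_\ell F(x^{(t)};\xi^{(t)})$. If $t\equiv 0\pmod\tau$, compute an SVD $G_\ell^{(t)}=U\Sigma V^\top$ (singular values in nonincreasing order) and set $P_\ell^{(t)}=U[:,:r_\ell]$, $Q_\ell^{(t)}=V[:,:r_\ell]$ (first $r_\ell$ columns); otherwise $P_\ell^{(t)}=P_\ell^{(t-1)}$, $Q_\ell^{(t)}=Q_\ell^{(t-1)}$. Update $X_\ell^{(t+1)}=X_\ell^{(t)}+P_\ell^{(t)}\rho_\ell^{(t)}((P_\ell^{(t)})^\top G_\ell^{(t)})$ if $m_\ell\le n_\ell$, and $X_\ell^{(t+1)}=X_\ell^{(t)}+\rho_\ell^{(t)}(G_\ell^{(t)}Q_\ell^{(t)})(Q_\ell^{(t)})^\top$ if $m_\ell>n_\ell$, where $\rho_\ell^{(t)}$ is an arbitrary (possibly stateful, history-dependent) map sending matrices to matrices of the same size (e.g. Adam, momentum SGD). *)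

(* Defs.v *)
From HB Require Import structures.
From mathcomp Require Import all_boot all_order all_algebra.
From mathcomp Require Import all_classical all_reals all_analysis.
Set Implicit Arguments. Unset Strict Implicit. Unset Printing Implicit Defensive.
Import Order.TTheory GRing.Theory Num.Theory.
Local Open Scope ring_scope.

Section GaLoreDefs.
Context (R : realType) (N : nat) (m n : 'I_N -> nat).

Definition param := forall l : 'I_N, 'M[R]_(m l, n l).

Definition padd (x y : param) : param := fun l => x l + y l.
Definition psub (x y : param) : param := fun l => x l - y l.

Definition frob2 (p q : nat) (A : 'M[R]_(p, q)) : R :=
  \sum_(i < p) \sum_(j < q) A i j ^+ 2.

(* Euclidean inner product / norm on R^d = concatenation of vec(X_l) *)
Definition pdot (x y : param) : R :=
  \sum_(l < N) \sum_(i < m l) \sum_(j < n l) x l i j * y l i j.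
Definition pnorm2 (x : param) : R := \sum_(l < N) frob2 (x l).
Definition pnorm (x : param) : R := Num.sqrt (pnorm2 x).

Definition is_gradient (f : param -> R) (g : param -> param) : Prop :=
  forall x (e : R), 0 < e -> exists2 delta : R, 0 < delta &
    forall h, pnorm h < delta ->
      `| f (padd x h) - f x - pdot (g x) h | <= e * pnorm h.

Definition assumption1 (f : param -> R) : Prop := exists c : R, forall x, c <= f x.

Definition assumption2 (g : param -> param) : Prop :=
  exists L : R, forall x y, pnorm (psub (g x) (g y)) <= L * pnorm (psub x y).

Definition oracle (d : measure_display) (Xi : measurableType d)
  (D : probability Xi R) (f : param -> R) (F : param -> Xi -> R)
  (gF : param -> Xi -> param) (g : param -> param) : Prop :=
  [/\ is_gradient f g,
      (forall xi, is_gradient (fun x => F x xi) (fun x => gF x xi)) &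
      (forall x, (D.-integrable setT (fun xi => (F x xi)%:E) /\
                 (f x)%:E = (\int[D]_xi (F x xi)%:E)%E))].

Definition assumption3 (d : measure_display) (Xi : measurableType d)
  (D : probability Xi R) (gF : param -> Xi -> param) (g : param -> param) : Prop :=
  (forall x l i j, D.-integrable setT (fun xi => (gF x xi l i j)%:E) /\
     (\int[D]_xi (gF x xi l i j)%:E)%E = (g x l i j)%:E) /\
  exists sigma : 'I_N -> R, forall x l,
    (\int[D]_xi (frob2 (gF x xi l - g x l))%:E <= (sigma l ^+ 2)%:E)%E.

Definition is_svd (p q : nat) (G : 'M[R]_(p, q)) (U : 'M[R]_p)
  (S : 'M[R]_(p, q)) (V : 'M[R]_q) : Prop :=
  [/\ U^T *m U = 1%:M, V^T *m V = 1%:M, G = U *m S *m V^T &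
    [/\ (forall (i : 'I_p) (j : 'I_q), val i <> val j -> S i j = 0),
      (forall (i : 'I_p) (j : 'I_q), val i = val j -> 0 <= S i j) &
      (forall (i i' : 'I_p) (j j' : 'I_q), val i = val j -> val i' = val j' ->
         (val i <= val i')%N -> S i' j' <= S i j)]].

Definition galore_proj (p q r : nat) (G : 'M[R]_(p, q))
  (P : 'M[R]_(p, r)) (Q : 'M[R]_(q, r)) : Prop :=
  exists U S V, is_svd G U S V /\
    (forall (i : 'I_p) (k : 'I_r) (k' : 'I_p), val k = val k' -> P i k = U i k') /\
    (forall (j : 'I_q) (k : 'I_r) (k' : 'I_q), val k = val k' -> Q j k = V j k').

Definition galore_run (Xi : Type) (gF : param -> Xi -> param)
  (r : 'I_N -> nat) (tau : nat) (xi : nat -> Xi) (x0 : param)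
  (x : nat -> param)
  (P : forall (t : nat) (l : 'I_N), 'M[R]_(m l, r l))
  (Q : forall (t : nat) (l : 'I_N), 'M[R]_(n l, r l))
  (rhoL : forall (t : nat) (l : 'I_N), 'M[R]_(r l, n l) -> 'M[R]_(r l, n l))
  (rhoR : forall (t : nat) (l : 'I_N), 'M[R]_(m l, r l) -> 'M[R]_(m l, r l))
  : Prop :=
  [/\ x 0%N = x0,
      (forall (t : nat) l, (t %% tau = 0)%N ->
         galore_proj (gF (x t) (xi t) l) (P t l) (Q t l)),
      (forall (t : nat) l, (t %% tau <> 0)%N ->
         P t l = P t.-1 l /\ Q t l = Q t.-1 l) &
      (forall (t : nat) l, x t.+1 l =
         if (m l <= n l)%N
         then x t l + P t l *m rhoL t l ((P t l)^T *m gF (x t) (xi t) l)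
         else x t l + rhoR t l (gF (x t) (xi t) l *m Q t l) *m (Q t l)^T)].

End GaLoreDefs.

Arguments galore_run [R N m n Xi] gF r tau xi x0 x P Q rhoL rhoR.

(* Main.v *)
Require Import Defs.
From HB Require Import structures.
From mathcomp Require Import all_boot all_order all_algebra.
From mathcomp Require Import all_classical all_reals all_analysis.
From mathcomp Require Import measurable_realfun.
From mathcomp Require Import ring lra zify.
Import Order.TTheory GRing.Theory Num.Theory.
Local Open Scope ring_scope.
Section W.
Context (R : realType).

Lemma sum_single (q : nat) (i0 : 'I_q) (F : 'I_q -> R) :
  (forall i, i != i0 -> F i = 0) -> \sum_i F i = F i0.
Proof. by move=> H; rewrite (bigD1 i0) //= big1 ?addr0 // => i /H. Qed.

Lemma Wlemma (q : nat) (W : 'M[R]_q) (e lam : 'I_q -> R) (i0 k : 'I_q) :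
  W^T *m W = 1%:M -> val i0 = 0%N ->
  e i0 = 1 -> (forall i, i != i0 -> e i = 4) ->
  (forall k k' : 'I_q, (val k <= val k')%N -> lam k' <= lam k) ->
  (forall i k, e i * W i k = W i k * lam k) ->
  (val k < q.-1)%N -> W i0 k = 0.
Proof.
move=> WW v0 e0 e4 mono eig kq.
have q0 : (0 < q)%N by apply: leq_ltn_trans (ltn_ord k).
have qp : (q.-1 < q)%N by rewrite ltn_predL.

set j := Ordinal qp.
have kj : k != j by apply/eqP => H; move: kq; rewrite H /= ltnn.
case: (eqVneq (W i0 k) 0) => // Hne; exfalso.
have lk : lam k = 1.
  have := eig i0 k; rewrite e0 mul1r => H.
  apply: (mulfI Hne); by rewrite mulr1 -H.
have colk : forall i, i != i0 -> W i k = 0.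
  move=> i /e4 ei; have := eig i k; rewrite ei lk mulr1 => H; lra.
have lj : lam j <= 1 by rewrite -lk; apply: mono; rewrite /= -ltnS prednK //; exact: ltnW.
have colj : forall i, i != i0 -> W i j = 0.
  move=> i /e4 ei; have := eig i j; rewrite ei => H.
  have : (4 - lam j) * W i j = 0 by rewrite mulrBl H; ring.
  move/eqP; rewrite mulf_eq0 => /orP [/eqP H2 | /eqP //]; lra.
have Hkj : (W^T *m W) k j = 0 by rewrite WW mxE (negbTE kj).
rewrite mxE (bigD1 i0) //= big1 ?addr0 in Hkj; last by move=> i /colk; rewrite !mxE => ->; rewrite mul0r.
rewrite mxE in Hkj.
have W0j : W i0 j = 0 by move/eqP: Hkj; rewrite mulf_eq0 (negbTE Hne) => /eqP.
have Hjj : (W^T *m W) j j = 1 by rewrite WW mxE eqxx.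
rewrite mxE (bigD1 i0) //= big1 ?addr0 in Hjj; last by move=> i /colj; rewrite !mxE => ->; rewrite mulr0.
by move: Hjj; rewrite mxE W0j mul0r => /eqP; rewrite eq_sym oner_eq0.
Qed.

Lemma AAt_diag (a b : nat) (A : 'M[R]_(a,b)) :
  (forall i j, val i <> val j -> A i j = 0) ->
  forall i i', (A *m A^T) i i' = if i == i' then \sum_j A i j ^+ 2 else 0.
Proof.
move=> Hoff i i'; rewrite mxE; case: eqP => [<-|ne].
  by apply: eq_bigr => j _; rewrite mxE expr2.
apply: big1 => j _; rewrite mxE.
case: (eqVneq (val i) (val j)) => [e1|/eqP n1]; last by rewrite (Hoff i j n1) mul0r.
case: (eqVneq (val i') (val j)) => [e2|/eqP n2]; last by rewrite (Hoff i' j n2) mulr0.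
by exfalso; apply: ne; apply: val_inj; rewrite e1 e2.
Qed.

Lemma sum_diag_sq (a b : nat) (A : 'M[R]_(a,b)) (i : 'I_a) (Hb : (val i < b)%N) :
  (forall i j, val i <> val j -> A i j = 0) ->
  \sum_j A i j ^+ 2 = A i (Ordinal Hb) ^+ 2.
Proof.
move=> Hoff; rewrite (bigD1 (Ordinal Hb)) //= big1 ?addr0 // => j jn.
rewrite Hoff; first by rewrite expr0n.
by move=> e; move: jn; rewrite -val_eqE /= -e eqxx.
Qed.

Lemma mul_diag_r (p q : nat) (U : 'M[R]_(p,q)) (D : 'M[R]_q) i k :
  (forall k k', k != k' -> D k k' = 0) -> (U *m D) i k = U i k * D k k.
Proof.
move=> HD; rewrite mxE (bigD1 k) //= big1 ?addr0 // => l lk.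
by rewrite HD ?mulr0.
Qed.

Lemma mul_diag_l (p q : nat) (D : 'M[R]_p) (U : 'M[R]_(p,q)) i k :
  (forall k k', k != k' -> D k k' = 0) -> (D *m U) i k = D i i * U i k.
Proof.
move=> HD; rewrite mxE (bigD1 i) //= big1 ?addr0 // => l li.
by rewrite HD ?mul0r // eq_sym.
Qed.

Lemma generic_case (q p : nat) (c : R) (A : 'M[R]_(q,p)) (B : 'M[R]_(q,p))
   (W : 'M[R]_q) (i0 k : 'I_q) :
  c ^+ 2 = 4 -> (q <= p)%N ->
  (forall i j, A i j = if val i == val j then (if val i == 0%N then 1 else c) else 0) ->
  (forall i j, val i <> val j -> B i j = 0) ->
  (forall i j, val i = val j -> 0 <= B i j) ->
  (forall i i' j j', val i = val j -> val i' = val j' -> (val i <= val i')%N ->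
      B i' j' <= B i j) ->
  W^T *m W = 1%:M ->
  A *m A^T *m W = W *m (B *m B^T) ->
  val i0 = 0%N -> (val k < q.-1)%N -> W i0 k = 0.
Proof.
move=> c2 qp HA Boff Bnn Bord WW eq v0 kq.
have Aoff : forall i j, val i <> val j -> A i j = 0.
  by move=> i j ne; rewrite HA; case: eqP.
have lt : forall i : 'I_q, (val i < p)%N by move=> i; exact: leq_trans (ltn_ord i) qp.
apply: (@Wlemma q W (fun i => (A *m A^T) i i) (fun k => (B *m B^T) k k)) => //.
- rewrite AAt_diag // eqxx (@sum_diag_sq _ _ _ _ (lt i0)) // HA /= v0 eqxx; by rewrite expr1n.
- move=> i ni; rewrite AAt_diag // eqxx (@sum_diag_sq _ _ _ _ (lt i)) // HA /= eqxx.
  case: eqP => // vi; exfalso; move/eqP: ni; apply; apply: val_inj; rewrite /= vi v0 //.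
- move=> k1 k2 le; rewrite !AAt_diag // !eqxx (@sum_diag_sq _ _ _ _ (lt k1)) // (@sum_diag_sq _ _ _ _ (lt k2)) //.
  have h1 := Bnn k1 (Ordinal (lt k1)) erefl.
  have h2 := Bnn k2 (Ordinal (lt k2)) erefl.
  have h3 := Bord k1 k2 (Ordinal (lt k1)) (Ordinal (lt k2)) erefl erefl le.
  nra.
- move=> i k1; have := congr1 (fun M : 'M[R]_q => M i k1) eq => /=.
  rewrite mul_diag_l; last by move=> x y xy; rewrite AAt_diag // (negbTE xy).
  rewrite mul_diag_r //; by move=> x y xy; rewrite AAt_diag // (negbTE xy).
Qed.

Lemma proj_zero (M Nn r : nat) (c : R) (G : 'M[R]_(M,Nn)) (P : 'M[R]_(M,r))
  (Q : 'M[R]_(Nn,r)) :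
  c ^+ 2 = 4 ->
  (forall i j, G i j = if val i == val j then (if val i == 0%N then 1 else c) else 0) ->
  (r < minn M Nn)%N -> galore_proj G P Q ->
  ((M <= Nn)%N -> forall i k, val i = 0%N -> P i k = 0) /\
  (~~ (M <= Nn)%N -> forall j k, val j = 0%N -> Q j k = 0).
Proof.
move=> c2 HG hr [U [S [V [[UU VV EG [Soff Snn Sord]] [HP HQ]]]]].
split.
- move=> le i k v0.
  have hk : (nat_of_ord k < M)%N by move: (ltn_ord k) hr; lia.
  rewrite (HP i k (Ordinal hk)) //.
  apply: (@generic_case M Nn c G S U i (Ordinal hk) c2 le HG Soff Snn Sord UU _ v0) => /=; last by move: (ltn_ord k) hr; lia.
  rewrite EG !trmx_mul !trmxK -!mulmxA.
  by rewrite UU mulmx1 (mulmxA V^T) VV mul1mx.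
- move=> lt j k v0.
  have hk : (nat_of_ord k < Nn)%N by move: (ltn_ord k) hr; lia.
  rewrite (HQ j k (Ordinal hk)) //.
  have le : (Nn <= M)%N by lia.
  apply: (@generic_case Nn M c G^T S^T V j (Ordinal hk) c2 le) => //=.
  + move=> i j'; rewrite mxE HG eq_sym; case: eqP => // ->; done.
  + by move=> i j' ne; rewrite mxE Soff //; move=> e; apply: ne.
  + by move=> i j' e; rewrite mxE Snn.
  + move=> i i' j1 j1' e e' le'; rewrite !mxE; apply: Sord => //.
    by move: le'; rewrite e e'.
  + rewrite trmxK EG !trmx_mul !trmxK -!mulmxA.
    by rewrite VV mulmx1 (mulmxA U^T) UU mul1mx.
  + by move: (ltn_ord k) hr; lia.
Qed.
End W.

Section S.
Context (R : realType).
Definition Dh : probability bool R := bernoulli_prob (2^-1 : R).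
Lemma mfb (h : bool -> R) : measurable_fun [set: bool] h.
Proof. move=> _ Y mY. exact: I. Qed.
Lemma mfbE (h : bool -> R) : measurable_fun [set: bool] (fun b => (h b)%:E).
Proof. exact/measurable_EFinP/mfb. Qed.
Lemma p01 : (0:R) <= (2:R)^-1 <= 1.
Proof. apply/andP; split; [by rewrite invr_ge0 | by rewrite invf_le1 ?ler1n]. Qed.
Lemma intD (h : bool -> R) : (\int[Dh]_b (h b)%:E = ((h true + h false) / 2)%:E)%E.
Proof.
rewrite integralE.
rewrite !integral_bernoulli_prob //; try exact: p01.
rewrite !funeposE !funenegE /=.
rewrite -!EFin_max.
rewrite -!EFinM -!EFinD; congr EFin.
have hm : forall a : R, Num.max a 0 - Num.max (- a) 0 = a.
  move=> a; rewrite !maxEle; case: ifP; case: ifP => //; try lra.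
rewrite -[in RHS](hm (h true)) -[in RHS](hm (h false)) /unstable.onem.
have -> : (1 - 2^-1 : R) = 2^-1 by rewrite {1}(splitr 1) mul1r addrK.
lra.
Qed.
Lemma intgD (h : bool -> R) : Dh.-integrable setT (fun b => (h b)%:E).
Proof.
apply/integrableP; split; first exact: mfbE.
rewrite integral_bernoulli_prob //; last exact: p01.
by rewrite -!EFinM -EFinD ltry.
Qed.
End S.


Section Main.
Context (R : realType) (N : nat) (m n : 'I_N -> nat) (l0 : 'I_N)
  (i0 : 'I_(m l0)) (j0 : 'I_(n l0)) (v0 : val i0 = 0%N) (w0 : val j0 = 0%N).

Local Notation prm := (param R m n).

Definition Em : prm := fun l => \matrix_(i, j)
  (if (l == l0) && (val i == 0%N) && (val j == 0%N) then 1 else 0).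
Definition Nm : prm := fun l => \matrix_(i, j)
  (if (l == l0) && (val i == val j) && (val i != 0%N) then 1 else 0).
Definition coord (x : prm) : R := x l0 i0 j0.

Lemma pdot_add_l (A B : prm) h :
  pdot (fun l => A l + B l) h = pdot A h + pdot B h.
Proof.
rewrite /pdot -big_split; apply: eq_bigr => l _.
rewrite -big_split; apply: eq_bigr => i _.
rewrite -big_split; apply: eq_bigr => j _.
by rewrite mxE mulrDl.
Qed.

Lemma pdot_scale_l (a : R) (A : prm) h :
  pdot (fun l => a *: A l) h = a * pdot A h.
Proof.
rewrite /pdot mulr_sumr; apply: eq_bigr => l _.
rewrite mulr_sumr; apply: eq_bigr => i _.
rewrite mulr_sumr; apply: eq_bigr => j _.
by rewrite mxE mulrA.
Qed.

Lemma pdot_add_r (A x h : prm) :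
  pdot A (padd x h) = pdot A x + pdot A h.
Proof.
rewrite /pdot -big_split; apply: eq_bigr => l _.
rewrite -big_split; apply: eq_bigr => i _.
rewrite -big_split; apply: eq_bigr => j _.
by rewrite /padd mxE mulrDr.
Qed.

Lemma pdotE h : pdot Em h = coord h.
Proof.
rewrite /pdot (bigD1 l0) //= [X in _ + X]big1 ?addr0; last first.
  move=> l ln; apply: big1 => i _; apply: big1 => j _.
  by rewrite mxE (negbTE ln) mul0r.
rewrite (bigD1 i0) //= [X in _ + X]big1 ?addr0; last first.
  move=> i ni; apply: big1 => j _; rewrite mxE eqxx /=.
  case: eqP => [e|]; last by rewrite mul0r.
  by exfalso; move/eqP: ni; apply; apply: val_inj; rewrite /= e v0.
rewrite (bigD1 j0) //= [X in _ + X]big1 ?addr0; last first.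
  move=> j nj; rewrite mxE eqxx /= v0 eqxx /=.
  case: eqP => [e|]; last by rewrite mul0r.
  by exfalso; move/eqP: nj; apply; apply: val_inj; rewrite /= e w0.
by rewrite mxE eqxx /= v0 w0 eqxx mul1r.
Qed.

Lemma coord_Em : coord Em = 1.
Proof. by rewrite /coord /Em mxE eqxx v0 w0. Qed.

Lemma sum_ge_term (I : finType) (F : I -> R) (k : I) :
  (forall i, 0 <= F i) -> F k <= \sum_i F i.
Proof. by move=> H; rewrite (bigD1 k) //= lerDl sumr_ge0. Qed.

Lemma frob2_ge0 p q (A : 'M[R]_(p, q)) : 0 <= frob2 A.
Proof. by apply: sumr_ge0 => i _; apply: sumr_ge0 => j _; exact: sqr_ge0. Qed.

Lemma pnorm2_ge0 (h : prm) : 0 <= pnorm2 h.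
Proof. by apply: sumr_ge0 => l _; exact: frob2_ge0. Qed.

Lemma coord_le (h : prm) : `|coord h| <= pnorm h.
Proof.
rewrite /pnorm -sqrtr_sqr ler_sqrt ?pnorm2_ge0 // /pnorm2.
have H1 : frob2 (h l0) <= \sum_l frob2 (h l).
  by apply: (@sum_ge_term _ (fun l => frob2 (h l))) => l; exact: frob2_ge0.
have H2 : \sum_j h l0 i0 j ^+ 2 <= frob2 (h l0).
  by apply: (@sum_ge_term _ (fun i => \sum_j h l0 i j ^+ 2)) => i; apply: sumr_ge0 => j _; exact: sqr_ge0.
have H3 : coord h ^+ 2 <= \sum_j h l0 i0 j ^+ 2.
  by apply: (@sum_ge_term _ (fun j => h l0 i0 j ^+ 2)) => j; exact: sqr_ge0.
exact: le_trans H3 (le_trans H2 H1).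
Qed.

Lemma grad_gen (c : R) (K : prm) (Fn : prm -> R) (Gn : prm -> prm) :
  (forall x, Fn x = coord x ^+ 2 / 2 + c * pdot K x) ->
  (forall x h, pdot (Gn x) h = coord x * coord h + c * pdot K h) ->
  is_gradient Fn Gn.
Proof.
move=> HF HG x e e0; exists (2 * e); first by rewrite mulr_gt0.
move=> h hlt; rewrite !HF HG pdot_add_r.
have -> : coord (padd x h) = coord x + coord h by rewrite /coord /padd mxE.
set a := coord x; set b := coord h; set K1 := pdot K x; set K2 := pdot K h.
have -> : (a + b) ^+ 2 / 2 + c * (K1 + K2) - (a ^+ 2 / 2 + c * K1) - (a * b + c * K2)
   = b ^+ 2 / 2 by field.
have hb := coord_le h; rewrite -/b in hb.
have p0 : 0 <= pnorm h by exact: sqrtr_ge0.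
have b2 : b ^+ 2 = `|b| ^+ 2 by rewrite real_normK ?num_real.
have nb : 0 <= `|b| by [].
rewrite ger0_norm; last by apply: divr_ge0; [exact: sqr_ge0|].
rewrite b2; nra.
Qed.

Lemma pnorm2_Em (Z : prm) (a : R) :
  (forall l i j, Z l i j = a * Em l i j) -> pnorm2 Z = a ^+ 2.
Proof.
move=> HZ.
have -> : pnorm2 Z = pdot (fun l => a *: Em l) Z.
  rewrite /pnorm2 /pdot; apply: eq_bigr => l _; rewrite /frob2.
  apply: eq_bigr => i _; apply: eq_bigr => j _.
  by rewrite mxE -HZ expr2.
rewrite pdot_scale_l pdotE /coord HZ.
by rewrite -/(coord Em) coord_Em mulr1 expr2.
Qed.

Definition cc (b : bool) : R := if b then 2 else -2.
Definition fo (x : prm) : R := coord x ^+ 2 / 2.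
Definition go (x : prm) : prm := fun l => coord x *: Em l.
Definition Fo (x : prm) (b : bool) : R := fo x + cc b * pdot Nm x.
Definition gFo (x : prm) (b : bool) : prm := fun l => go x l + cc b *: Nm l.

Lemma go_pdot x h : pdot (go x) h = coord x * coord h + 0 * pdot Nm h.
Proof. by rewrite /go pdot_scale_l pdotE mul0r addr0. Qed.

Lemma gFo_pdot x b h : pdot (gFo x b) h = coord x * coord h + cc b * pdot Nm h.
Proof. by rewrite /gFo pdot_add_l pdot_scale_l -/(go x) go_pdot mul0r addr0. Qed.

Lemma grad_f : is_gradient fo go.
Proof.
apply: (@grad_gen 0 Nm) => [x|x h]; last exact: go_pdot.
by rewrite /fo mul0r addr0.
Qed.

Lemma grad_F b : is_gradient (fun x => Fo x b) (fun x => gFo x b).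
Proof. by apply: (@grad_gen (cc b) Nm) => [x|x h]; [by [] | exact: gFo_pdot]. Qed.

Lemma pnorm2_go x : pnorm2 (go x) = coord x ^+ 2.
Proof. by apply: pnorm2_Em => l i j; rewrite /go mxE. Qed.

Lemma lip_go : assumption2 go.
Proof.
exists 1 => x y; rewrite mul1r.
have -> : pnorm (psub (go x) (go y)) = `|coord x - coord y|.
  rewrite /pnorm (@pnorm2_Em _ (coord x - coord y)) ?sqrtr_sqr //.
  by move=> l i j; rewrite /psub /go !mxE mulrBl.
have -> : coord x - coord y = coord (psub x y) by rewrite /coord /psub !mxE; reflexivity.
exact: coord_le.
Qed.

Lemma cc2 b : cc b ^+ 2 = 4.
Proof. by case: b; rewrite /cc; ring. Qed.

Lemma gFo_form x b : coord x = 1 -> forall i j, gFo x b l0 i j =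
  if val i == val j then (if val i == 0%N then 1 else cc b) else 0.
Proof.
move=> Hc i j; rewrite /gFo /go !mxE eqxx /= -/(coord x) Hc mul1r.
case: (eqVneq (val i) (val j)) => [e|ne] /=.
  rewrite -e andbb; case: eqP => _ /=; lra.
rewrite mulr0 addr0.
case: eqP => //= e1; case: eqP => //= e2.
by move: ne; rewrite /= e1 e2 eqxx.
Qed.

Lemma run_inv (r : 'I_N -> nat) tau (xi : nat -> bool) (x : nat -> prm) P Q rhoL rhoR :
  (r l0 < minn (m l0) (n l0))%N -> galore_run gFo r tau xi Em x P Q rhoL rhoR ->
  forall t, coord (x t) = 1 /\
   (((m l0 <= n l0)%N -> forall k, P t l0 i0 k = 0) /\
    (~~ (m l0 <= n l0)%N -> forall k, Q t l0 j0 k = 0)).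
Proof.
move=> hr [H0 Hproj Hkeep Hupd].
have PZ : forall t, coord (x t) = 1 -> (t %% tau = 0)%N ->
   (((m l0 <= n l0)%N -> forall k, P t l0 i0 k = 0) /\
    (~~ (m l0 <= n l0)%N -> forall k, Q t l0 j0 k = 0)).
  move=> t ct tt.
  have [HA HB] := @proj_zero R _ _ _ _ _ _ _ (cc2 (xi t)) (@gFo_form (x t) (xi t) ct) hr (Hproj t l0 tt).
  by split => [le k|lt k]; [exact: HA | exact: HB].
elim=> [|t [IHc IHp]].
  have c0 : coord (x 0%N) = 1 by rewrite H0 coord_Em.
  by split => //; apply: PZ => //; rewrite mod0n.
have c1 : coord (x t.+1) = 1.
  rewrite /coord Hupd; case: ifP => hmn.
    rewrite mxE [X in _ + X]mxE big1 ?addr0 //.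
    by move=> k _; rewrite (proj1 IHp hmn k) mul0r.
  rewrite mxE [X in _ + X]mxE big1 ?addr0 //.
  by move=> k _; rewrite mxE (proj2 IHp (negbT hmn) k) mulr0.
split => //.
case: (eqVneq (t.+1 %% tau)%N 0%N) => [e|/eqP ne]; first exact: PZ.
by have [-> ->] := Hkeep t.+1 l0 ne.
Qed.

Lemma frob2_var x b l : frob2 (gFo x b l - go x l) = frob2 (2 *: Nm l).
Proof.
rewrite /frob2; apply: eq_bigr => i _; apply: eq_bigr => j _.
by rewrite /gFo !mxE; case: b; rewrite /cc; ring.
Qed.

Lemma main_sec :
  exists (f : param R m n -> R) (g : param R m n -> param R m n)
         (d : measure_display) (Xi : measurableType d) (D : probability Xi R)
         (F : param R m n -> Xi -> R) (gF : param R m n -> Xi -> param R m n)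
         (x0 : param R m n) (eps0 : R),
    [/\ assumption1 f, assumption2 g, oracle D f F gF g,
        assumption3 D gF g & 0 < eps0] /\
    forall (r : 'I_N -> nat) (tau : nat) (xi : nat -> Xi)
           (x : nat -> param R m n)
           (P : forall (t : nat) (l : 'I_N), 'M[R]_(m l, r l))
           (Q : forall (t : nat) (l : 'I_N), 'M[R]_(n l, r l))
           (rhoL : forall (t : nat) (l : 'I_N), 'M[R]_(r l, n l) -> 'M[R]_(r l, n l))
           (rhoR : forall (t : nat) (l : 'I_N), 'M[R]_(m l, r l) -> 'M[R]_(m l, r l)),
      (forall l, r l < minn (m l) (n l))%N -> (0 < tau)%N ->
      galore_run gF r tau xi x0 x P Q rhoL rhoR ->
      forall t : nat, eps0 <= pnorm2 (g (x t)).
Proof.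
exists fo, go, _, bool, (Dh R), Fo, gFo, Em, 1; split; first split.
- by exists 0 => x; rewrite /fo divr_ge0 // sqr_ge0.
- exact: lip_go.
- split; [exact: grad_f | exact: grad_F |] => x; split; first exact: intgD.
  by rewrite intD; congr EFin; rewrite /Fo /cc; lra.
- split.
    move=> x l i j; split; first exact: intgD.
    by rewrite intD; congr EFin; rewrite /gFo !mxE /cc; lra.
  exists (fun l => Num.sqrt (frob2 (2 *: Nm l))) => x l.
  rewrite intD !frob2_var sqr_sqrtr ?frob2_ge0 // lee_fin; lra.
- exact: ltr01.
move=> r tau xi x P Q rhoL rhoR hr _ run t.
have [c _] := @run_inv r tau xi x P Q rhoL rhoR (hr l0) run t.
by rewrite pnorm2_go c expr1n.
Qed.
End Main.

Theorem theorem1 (R : realType) (N : nat) (m n : 'I_N -> nat) :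
  (0 < N)%N -> (forall l, 0 < m l)%N -> (forall l, 0 < n l)%N ->
  exists (f : param R m n -> R) (g : param R m n -> param R m n)
         (d : measure_display) (Xi : measurableType d) (D : probability Xi R)
         (F : param R m n -> Xi -> R) (gF : param R m n -> Xi -> param R m n)
         (x0 : param R m n) (eps0 : R),
    [/\ assumption1 f, assumption2 g, oracle D f F gF g,
        assumption3 D gF g & 0 < eps0] /\
    forall (r : 'I_N -> nat) (tau : nat) (xi : nat -> Xi)
           (x : nat -> param R m n)
           (P : forall (t : nat) (l : 'I_N), 'M[R]_(m l, r l))
           (Q : forall (t : nat) (l : 'I_N), 'M[R]_(n l, r l))
           (rhoL : forall (t : nat) (l : 'I_N), 'M[R]_(r l, n l) -> 'M[R]_(r l, n l))
           (rhoR : forall (t : nat) (l : 'I_N), 'M[R]_(m l, r l) -> 'M[R]_(m l, r l)),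
      (forall l, r l < minn (m l) (n l))%N -> (0 < tau)%N ->
      galore_run gF r tau xi x0 x P Q rhoL rhoR ->
      forall t : nat, eps0 <= pnorm2 (g (x t)).
Proof.
move=> HN Hm Hn.
pose l0 := Ordinal HN.
exact: (@main_sec R N m n l0 (Ordinal (Hm l0)) (Ordinal (Hn l0)) erefl erefl).
Qed.
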